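(* Let $X$ be a topological space, $x\in X$, and $\mathcal B\subseteq\wp(X)$. Then the games $G_1(\Omega_{X,x},\mathcal B)$ and $G_1(\mathscr N(x),\neg\mathcal B)$ are dual.
   Context: $\Omega_{X,x}=\{A\subseteq X:x\in\mathrm{cl}_X(A)\}$; $\mathscr N(x)$ is the set of open sets containing $x$. In $G_1(\mathcal E,\mathcal C)$, at each inning $n\in\omega$ One plays $E_n\in\mathcal E$ and Two picks $x_n\in E_n$; Two wins iff $\{x_n:n\in\omega\}\in\mathcal C$; $\neg\mathcal C$ is the complement of $\mathcal C$. A strategy for One maps finite sequences of Two's moves to moves; it is predetermined if it depends only on the inning number. A strategy for Two maps finite sequences $(E_0,\dots,E_n)$ of One's moves to an element of $E_n$; it is Markov if it depends only on $E_n$ and $n$. Games $G,H$ are dual if: One has a winning strategy in $G$ iff Two has one in $H$; One has a winning strategy in $H$ iff Two has one in $G$; One has a winning predetermined strategy in $G$ iff Two has a winning Markov strategy in $H$; and One has a winning predetermined strategy in $H$ iff Two has a winning Markov strategy in $G$. *)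

(* Defs.v *)
From HB Require Import structures.
From mathcomp Require Import all_boot all_order.
From mathcomp Require Import all_classical all_reals topology.
Set Implicit Arguments. Unset Strict Implicit. Unset Printing Implicit Defensive.
Local Open Scope classical_set_scope.

(* Selection games G_1(E, C) on a type X: in inning n, One plays E_n \in E,
   Two picks x_n \in E_n; Two wins iff range x \in C. *)
Section Games.
Variable X : Type.

Definition Omega (T : topologicalType) (x : T) : set (set T) :=
  [set A | closure A x].
Definition Nbd (T : topologicalType) (x : T) : set (set T) :=
  [set U | open U /\ U x].

Definition hist (T : Type) (f : nat -> T) (n : nat) : seq T := mkseq f n.

Definition One_has_winning (E C : set (set X)) : Prop :=
  exists sigma : seq X -> set X,
    (forall s, E (sigma s)) /\
    forall x : nat -> X, (forall n, sigma (hist x n) (x n)) -> ~ C (range x).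

Definition Two_has_winning (E C : set (set X)) : Prop :=
  exists tau : seq (set X) -> X,
    forall En : nat -> set X, (forall n, E (En n)) ->
      (forall n, En n (tau (hist En n.+1))) /\
      C (range (fun n => tau (hist En n.+1))).

Definition One_has_winning_predetermined (E C : set (set X)) : Prop :=
  exists sigma : nat -> set X,
    (forall n, E (sigma n)) /\
    forall x : nat -> X, (forall n, sigma n (x n)) -> ~ C (range x).

Definition Two_has_winning_Markov (E C : set (set X)) : Prop :=
  exists tau : set X -> nat -> X,
    (forall A n, E A -> A (tau A n)) /\
    forall En : nat -> set X, (forall n, E (En n)) ->
      C (range (fun n => tau (En n) n)).

Definition dual_games (E1 C1 E2 C2 : set (set X)) : Prop :=
  [/\ One_has_winning E1 C1 <-> Two_has_winning E2 C2,
      One_has_winning E2 C2 <-> Two_has_winning E1 C1,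
      One_has_winning_predetermined E1 C1 <-> Two_has_winning_Markov E2 C2 &
      One_has_winning_predetermined E2 C2 <-> Two_has_winning_Markov E1 C1].
End Games.

(* Main.v *)
Require Import Defs.
From mathcomp Require Import all_boot all_order.
From mathcomp Require Import all_classical all_reals topology.
Local Open Scope classical_set_scope.

Definition pickd {T : Type} (d : T) (P : T -> Prop) : T :=
  match pselect (exists y, P y) with
  | left h => proj1_sig (cid h)
  | right _ => d end.

Lemma pickdP {T : Type} (d : T) (P : T -> Prop) : (exists y, P y) -> P (pickd d P).
Proof. move=> h; rewrite /pickd; case: pselect => // h'; exact: proj2_sig. Qed.

Lemma pickdE {T : Type} (d : T) (P : T -> Prop) : P (pickd d P) \/ pickd d P = d.
Proof. rewrite /pickd; case: pselect => h; [left; exact: proj2_sig | by right]. Qed.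

Section Gen.
Variable X : Type.

Lemma fwd (x : X) (E E' C C2 : set (set X)) :
  (forall A U, E A -> E' U -> exists y, A y /\ U y) ->
  (forall r, ~ C r -> C2 r) ->
  One_has_winning E' C -> Two_has_winning E C2.
Proof.
move=> hm hC [sigma [hs hw]].
pose h ys (U : set X) := pickd x (fun y => U y /\ sigma ys y).
pose P (s : seq (set X)) := foldl (fun ys U => rcons ys (h ys U)) [::] s.
exists (fun s => last x (P s)) => En hE.
pose y n := last x (P (hist En n.+1)).
have key : forall n, P (hist En n) = hist y n.
  elim=> [//|n IH]; rewrite /hist !mkseqS /P foldl_rcons -/(P _).
  rewrite /y /hist mkseqS /P foldl_rcons -/(P _) last_rcons.
  by rewrite -/(hist En n) IH.
have yE : forall n, y n = h (hist y n) (En n).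
  by move=> n; rewrite /y /hist mkseqS /P foldl_rcons -/(P _) last_rcons -/(hist En n) key.
have spec : forall n, En n (y n) /\ sigma (hist y n) (y n).
  move=> n; rewrite yE; apply: (pickdP x (fun z => En n z /\ sigma (hist y n) z)).
  have [z [h1 h2]] := hm _ _ (hE n) (hs (hist y n)); by exists z.
split; first by move=> n; have [] := spec n.
apply: (hC _ (hw y _)) => n; by have [] := spec n.
Qed.

Lemma extend (E C : set (set X)) (e0 : set X) (tau : seq (set X) -> X) :
  E e0 ->
  (forall En : nat -> set X, (forall n, E (En n)) ->
      (forall n, En n (tau (hist En n.+1))) /\ C (range (fun n => tau (hist En n.+1)))) ->
  forall s U, (forall i, E (nth e0 s i)) -> E U -> U (tau (rcons s U)).
Proof.
move=> he0 ht s U hs hU.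
pose En n := nth e0 (rcons s U) n.
have hE : forall n, E (En n).
  move=> n; rewrite /En nth_rcons; case: ifP => // _; case: ifP => //.
have [h1 _] := ht En hE.
have := h1 (size s).
have -> : hist En (size s).+1 = rcons s U.
  by rewrite /hist /En -(size_rcons s U) mkseq_nth.
by rewrite /En nth_rcons ltnn eqxx.
Qed.

Lemma bwd (E E' C C' : set (set X)) (e0 : set X) :
  E e0 ->
  (forall f : set X -> X, (forall A, E A -> A (f A)) ->
     exists V, E' V /\ V `<=` f @` E) ->
  (forall r, C r -> ~ C' r) ->
  Two_has_winning E C -> One_has_winning E' C'.
Proof.
move=> he0 hK hC [tau ht].
have hx := @extend E C e0 tau he0 ht.
pose g s a := pickd e0 (fun U => E U /\ tau (rcons s U) = a).
have gE : forall s a, E (g s a).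
  by move=> s a; rewrite /g; case: (pickdE e0 (fun U => E U /\ tau (rcons s U) = a)) => [[]|->].
pose R (p : seq X) := foldl (fun s a => rcons s (g s a)) [::] p.
have RE : forall p i, E (nth e0 (R p) i).
  elim/last_ind => [i|p a IH i]; first by rewrite /R /= nth_nil.
  rewrite /R foldl_rcons -/(R p) nth_rcons; case: ifP => // _; case: ifP => //.
pose sigma p := pickd e0 (fun V => E' V /\ V `<=` (fun U => tau (rcons (R p) U)) @` E).
have sigmaP : forall p, E' (sigma p) /\ sigma p `<=` (fun U => tau (rcons (R p) U)) @` E.
  move=> p; apply: (pickdP e0 (fun V => E' V /\ V `<=` (fun U => tau (rcons (R p) U)) @` E)).
  apply: hK => A hA; exact: hx.
exists sigma; split; first by move=> s; have [] := sigmaP s.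
move=> x hxs.
pose En n := g (R (hist x n)) (x n).
have key : forall n, R (hist x n) = hist En n.
  elim=> [//|n IH]; rewrite [hist x _]/hist [hist En _]/hist !mkseqS.
  rewrite {1}/R foldl_rcons -/(R _) -/(hist x n) -/(hist En n) IH /En -IH //.
have gP : forall n, E (En n) /\ tau (rcons (R (hist x n)) (En n)) = x n.
  move=> n; apply: (pickdP e0 (fun U => E U /\ tau (rcons (R (hist x n)) U) = x n)).
  have [_ h2] := sigmaP (hist x n).
  have [U hU eU] := h2 _ (hxs n); by exists U.
have hE : forall n, E (En n) by move=> n; have [] := gP n.
have [_ h2] := ht En hE.
apply: hC.
suff <- : (fun n => tau (hist En n.+1)) = x by [].
apply: funext => n; have [_ <-] := gP n.
by rewrite /hist mkseqS -/(hist En n) key.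
Qed.

Lemma fwdM (x : X) (E E' C C2 : set (set X)) :
  (forall A U, E A -> E' U -> exists y, A y /\ U y) ->
  (forall r, ~ C r -> C2 r) ->
  One_has_winning_predetermined E' C -> Two_has_winning_Markov E C2.
Proof.
move=> hm hC [sigma [hs hw]].
pose tau A n := pickd x (fun y => A y /\ sigma n y).
have tP : forall A n, E A -> A (tau A n) /\ sigma n (tau A n).
  move=> A n hA; apply: (pickdP x (fun y => A y /\ sigma n y)); have [z [h1 h2]] := hm _ _ hA (hs n); by exists z.
exists tau; split; first by move=> A n hA; have [] := tP A n hA.
move=> En hE; apply: (hC _ (hw _ _)) => n; by have [] := tP _ n (hE n).
Qed.

Lemma bwdM (E E' C C' : set (set X)) (e0 : set X) :
  E e0 ->
  (forall f : set X -> X, (forall A, E A -> A (f A)) ->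
     exists V, E' V /\ V `<=` f @` E) ->
  (forall r, C r -> ~ C' r) ->
  Two_has_winning_Markov E C -> One_has_winning_predetermined E' C'.
Proof.
move=> he0 hK hC [tau [hl hw]].
pose sigma n := pickd e0 (fun V => E' V /\ V `<=` (fun A => tau A n) @` E).
have sigmaP : forall n, E' (sigma n) /\ sigma n `<=` (fun A => tau A n) @` E.
  move=> n; apply: (pickdP e0 (fun V => E' V /\ V `<=` (fun A => tau A n) @` E)).
  apply: hK => A hA; exact: hl.
exists sigma; split; first by move=> n; have [] := sigmaP n.
move=> x hxs.
pose En n := pickd e0 (fun A => E A /\ tau A n = x n).
have gP : forall n, E (En n) /\ tau (En n) n = x n.
  move=> n; apply: (pickdP e0 (fun A => E A /\ tau A n = x n)); have [_ h2] := sigmaP n.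
  have [U hU eU] := h2 _ (hxs n); by exists U.
have hE : forall n, E (En n) by move=> n; have [] := gP n.
apply: hC.
suff <- : (fun n => tau (En n) n) = x by exact: hw.
by apply: funext => n; have [] := gP n.
Qed.
End Gen.

Section Top.
Variables (X : topologicalType) (x : X).

Lemma meetsON A U : Omega x A -> Nbd x U -> exists y, A y /\ U y.
Proof.
move=> hA [oU Ux]; have [y [h1 h2]] := hA U (open_nbhs_nbhs (conj oU Ux)).
by exists y.
Qed.

Lemma meetsNO A U : Nbd x A -> Omega x U -> exists y, A y /\ U y.
Proof. by move=> hA hU; have [y [h1 h2]] := @meetsON U A hU hA; exists y. Qed.

Lemma KNO (f : set X -> X) : (forall A, Nbd x A -> A (f A)) ->
  exists V, Omega x V /\ V `<=` f @` Nbd x.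
Proof.
move=> hf; exists (f @` Nbd x); split => //.
move=> B; rewrite nbhsE => -[U [oU Ux] UB].
exists (f U); split; first by exists U.
by apply: UB; apply: hf.
Qed.

Lemma KON (f : set X -> X) : (forall A, Omega x A -> A (f A)) ->
  exists V, Nbd x V /\ V `<=` f @` Omega x.
Proof.
move=> hf.
have ncl : ~ closure (~` (f @` Omega x)) x.
  move=> hc; have := hf _ hc; apply; by exists (~` (f @` Omega x)).
have [B [nB ne]] : exists B, nbhs x B /\ ~ (~` (f @` Omega x) `&` B !=set0).
  apply: contrapT => hn; apply: ncl => B nB; apply: contrapT => h; apply: hn; by exists B.
move: nB; rewrite nbhsE => -[U [oU Ux] UB].
exists U; split; first by [].
move=> y Uy; apply: contrapT => ny; apply: ne; exists y; split => //; exact: UB.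
Qed.

End Top.

Theorem mainTheorem4 (X : topologicalType) (x : X) (B : set (set X)) :
  dual_games (Omega x) B (Nbd x) (~` B).
Proof.
have oT : Omega x setT.
  move=> C hC; exists x; split => //; exact: nbhs_singleton.
have nT : Nbd x setT by split => //; exact: openT.
split; [split|split|split|split].
- apply: (@fwd _ x _ _ _ _ (@meetsNO X x)) => r; by [].
- apply: (@bwd _ _ _ _ _ _ nT (@KNO X x)) => r; by [].
- apply: (@fwd _ x _ _ _ _ (@meetsON X x)) => r /= h; exact: contrapT.
- apply: (@bwd _ _ _ _ _ _ oT (@KON X x)) => r /= h; by apply.
- apply: (@fwdM _ x _ _ _ _ (@meetsNO X x)) => r; by [].
- apply: (@bwdM _ _ _ _ _ _ nT (@KNO X x)) => r; by [].
- apply: (@fwdM _ x _ _ _ _ (@meetsON X x)) => r /= h; exact: contrapT.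
- apply: (@bwdM _ _ _ _ _ _ oT (@KON X x)) => r /= h; by apply.
Qed.
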